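(* Let $X=(B\,|\,A)\in\mathbb{Z}^{d\times N}$ with $B\in\mathbb{Z}^{d\times d}$ a diagonal matrix of full rank $d$ and $A\in\mathbb{Z}^{d\times(N-d)}$, and let $P$ be a coordinatizing path. For each of the $2^{N-\kappa(A)}$ possible choices of signs of the entries of $P$, there is a unique matrix $X_\sigma=(B\,|\,A_\sigma)$ whose entries at the positions of $P$ have these signs and which represents the same arithmetic matroid $\mathcal{A}(X)$. Moreover, every representation of $\mathcal{A}(X)$ of the form $(B\,|\,A'')$ (i.e. in $B$-basic form for this $B$) is one of the matrices $X_\sigma$.
   Context: The arithmetic matroid $\mathcal{A}(X)$ represented by $X\in\mathbb{Z}^{d\times N}$ with columns $x_1,\dots,x_N$ is $([N],\operatorname{rk},m)$ where $\operatorname{rk}(S)$ is the dimension of the real span $\langle S\rangle_{\mathbb{R}}$ of $\{x_e:e\in S\}$ and $m(S)=|(\langle S\rangle_{\mathbb{R}}\cap\mathbb{Z}^d)/\langle S\rangle|$, with $\langle S\rangle$ the subgroup generated by $\{x_e:e\in S\}$. Index the columns of $A$ by $d+1,\dots,N$. Let $\mathcal{G}_A$ be the bipartite graph on vertices $\{r_1,\dots,r_d\}\cup\{c_{d+1},\dots,c_N\}$ with an edge $\{r_i,c_j\}$ iff $a_{ij}\ne0$; edges are identified with non-zero entries of $A$. $\kappa(A)$ is the number of connected components of $\mathcal{G}_A$. A coordinatizing path is the set of entries of $A$ corresponding to the edges of a spanning forest of $\mathcal{G}_A$; it has $N-\kappa(A)$ elements. *)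

(* Defs.v *)
From Stdlib Require Import Reals.
From HB Require Import structures.
From mathcomp Require Import all_boot all_order all_algebra.
From mathcomp Require Import Rstruct.
Set Implicit Arguments. Unset Strict Implicit. Unset Printing Implicit Defensive.
Import Order.TTheory GRing.Theory Num.Theory.
Local Open Scope ring_scope.

Definition toR (d N : nat) (X : 'M[int]_(d, N)) : 'M[R]_(d, N) :=
  map_mx (fun z : int => z%:~R) X.

(** rk(S) = dim of the real span of the columns x_e, e in S
    (= rank of the real matrix whose columns outside S are zeroed). *)
Definition arank (d N : nat) (X : 'M[int]_(d, N)) (S : {set 'I_N}) : nat :=
  \rank (toR (\matrix_(i < d, j < N) (if j \in S then X i j else 0))).

Definition in_real_span (d N : nat) (X : 'M[int]_(d, N)) (S : {set 'I_N})
  (v : 'cV[int]_d) : Prop :=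
  exists c : 'I_N -> R, toR v = \sum_(e in S) c e *: col e (toR X).

Definition in_int_span (d N : nat) (X : 'M[int]_(d, N)) (S : {set 'I_N})
  (v : 'cV[int]_d) : Prop :=
  exists c : 'I_N -> int, v = \sum_(e in S) c e *: col e X.

(** m(S) = k : the quotient group (<S>_R ∩ Z^d) / <S> has exactly k elements,
    i.e. there are k representatives, pairwise non-congruent mod <S>,
    covering <S>_R ∩ Z^d modulo <S>. *)
Definition amult_is (d N : nat) (X : 'M[int]_(d, N)) (S : {set 'I_N}) (k : nat)
  : Prop :=
  exists f : 'I_k -> 'cV[int]_d,
    [/\ forall a, in_real_span X S (f a),
        forall a b, in_int_span X S (f a - f b) -> a = b
      & forall v, in_real_span X S v -> exists a, in_int_span X S (v - f a)].

Definition same_arith_matroid (d N : nat) (X Y : 'M[int]_(d, N)) : Prop :=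
  forall S : {set 'I_N},
    arank X S = arank Y S /\ (forall k, amult_is X S k <-> amult_is Y S k).

(** The bipartite graph G_A: vertices inl i = r_i (rows), inr j = c_j (columns);
    an entry set E (positions (i,j)) gives the edges {r_i, c_j}, (i,j) in E. *)
Definition bip_adj (d n : nat) (E : {set 'I_d * 'I_n}) : rel ('I_d + 'I_n) :=
  fun u v => match u, v with
             | inl i, inr j => (i, j) \in E
             | inr j, inl i => (i, j) \in E
             | _, _ => false
             end.

Definition support_entries (d n : nat) (A : 'M[int]_(d, n)) : {set 'I_d * 'I_n} :=
  [set p | A p.1 p.2 != 0].

Definition has_cycle (d n : nat) (E : {set 'I_d * 'I_n}) : Prop :=
  exists s : seq ('I_d + 'I_n), [/\ (3 <= size s)%N, uniq s & cycle (bip_adj E) s].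

(** P is a coordinatizing path of A: the entries of a spanning forest of G_A. *)
Definition coordinatizing_path (d n : nat) (A : 'M[int]_(d, n))
  (P : {set 'I_d * 'I_n}) : Prop :=
  [/\ P \subset support_entries A,
      ~ has_cycle P
    & forall u v, connect (bip_adj P) u v = connect (bip_adj (support_entries A)) u v].

Definition has_signs (d n : nat) (A' : 'M[int]_(d, n)) (P : {set 'I_d * 'I_n})
  (sigma : 'I_d * 'I_n -> bool) : Prop :=
  forall p, p \in P -> if sigma p then 0 < A' p.1 p.2 else A' p.1 p.2 < 0.

(* Main.v *)
Require Import Defs.
From Stdlib Require Import Reals.
From HB Require Import structures.
From mathcomp Require Import all_boot all_order all_algebra.
From mathcomp Require Import Rstruct.
Set Implicit Arguments. Unset Strict Implicit. Unset Printing Implicit Defensive.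
Import Order.TTheory GRing.Theory Num.Theory.
Local Open Scope ring_scope.
Set Warnings "-notation-overridden -ambiguous-paths".
From mathcomp Require Import fingroup perm zify.
Section Lattice.
Variable d : nat.
Definition lat (Y : 'M[int]_d) (v : 'cV[int]_d) : Prop := exists c, v = Y *m c.

Definition idx_is (L : 'cV[int]_d -> Prop) (k : nat) :=
  exists f : 'I_k -> 'cV[int]_d,
    (forall a b, L (f a - f b) -> a = b) /\ (forall v, exists a, L (v - f a)).

Lemma idx_le L k k' : (forall x y, L x -> L y -> L (x - y)) ->
  idx_is L k -> idx_is L k' -> (k <= k')%N.
Proof.
move=> Lsub [f [finj _]] [g [_ gcov]].
have [h hP] := @fin_all_exists _ (fun _ => 'I_k') (fun a b => L (f a - g b))
  (fun a => gcov (f a)).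
have hinj : injective h.
  move=> a b hab; apply: finj.
  have := Lsub _ _ (hP a) (hP b); rewrite hab.
  by rewrite opprB addrA subrK.
by have := leq_card h hinj; rewrite !card_ord.
Qed.

Lemma idx_uniq L k k' : (forall x y, L x -> L y -> L (x - y)) ->
  idx_is L k -> idx_is L k' -> k = k'.
Proof.
move=> Ls H1 H2; apply/eqP; rewrite eqn_leq.
by rewrite (idx_le Ls H1 H2) (idx_le Ls H2 H1).
Qed.

Lemma lat_sub Y x y : lat Y x -> lat Y y -> lat Y (x - y).
Proof. by move=> [c ->] [c' ->]; exists (c - c'); rewrite mulmxBr. Qed.

Lemma idx_transfer (L0 D R0 : 'M[int]_d) k :
  L0 \in unitmx -> R0 \in unitmx -> idx_is (lat D) k ->
  idx_is (lat (L0 *m D *m R0)) k.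
Proof.
move=> uL uR [f [finj fcov]]; exists (fun a => L0 *m f a); split.
  move=> a b [c Hc]; apply: finj; exists (R0 *m c).
  have H := congr1 (mulmx (invmx L0)) Hc.
  rewrite -mulmxBr !mulmxA mulVmx // !mul1mx in H.
  by rewrite H !mulmxA.
move=> v; have [a [c Hc]] := fcov (invmx L0 *m v); exists a.
exists (invmx R0 *m c).
rewrite -!mulmxA mulKVmx //.
have H := congr1 (mulmx L0) Hc; rewrite mulmxBr mulKVmx // in H.

Qed.

End Lattice.
Section Diag.
Variable d : nat.
Variable D : 'M[int]_d.
Hypothesis Ddiag : forall i j, i != j -> D i j = 0.
Hypothesis Dnz : forall i, D i i != 0.

Lemma lat_diagP v : lat D v <-> forall i, (D i i %| v i ord0)%Z.
Proof.
split.
  move=> [c ->] i; rewrite mxE (bigD1 i) //= big1 ?addr0 ?dvdz_mulr //.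
  by move=> j ji; rewrite Ddiag ?mul0r // eq_sym.
move=> H; exists (\col_i ((v i ord0) %/ D i i)%Z).
apply/matrixP=> i j; rewrite (ord1 j) mxE (bigD1 i) //= big1 ?addr0.
  by rewrite mxE mulrC divzK.
by move=> j' ji; rewrite Ddiag ?mul0r // eq_sym.
Qed.

Definition dm (i : 'I_d) := `|D i i|%N.
Definition dT := {dffun forall i : 'I_d, 'I_(dm i)}.

Lemma card_dT : #|{: dT}| = (\prod_i dm i)%N.
Proof.
rewrite card_dep_ffun foldrE big_image /=.
by apply: eq_bigr => i _; rewrite card_ord.
Qed.

Definition dg (t : dT) : 'cV[int]_d := \col_i ((t i : nat)%:Z).

Lemma idx_diag : idx_is (lat D) (\prod_i dm i).
Proof.
rewrite -card_dT.
exists (fun a => dg (enum_val a)); split.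
  move=> a b /lat_diagP H; apply: enum_val_inj; apply/ffunP => i.
  have := H i; rewrite !mxE dvdzE => Hd.
  have lt1 := ltn_ord (enum_val a i); have lt2 := ltn_ord (enum_val b i).
  apply/val_inj => /=; move: Hd lt1 lt2; rewrite /dm.
  set p := nat_of_ord _; set q := nat_of_ord _; move=> Hd lt1 lt2.
  case: (eqVneq `|(p%:Z - q%:Z)%R|%N 0%N) => [E|nz].
    lia.
  have nz0 : (0 < `|(p%:Z - q%:Z)%R|)%N by rewrite lt0n.
  by have := dvdn_leq nz0 Hd; lia.
move=> v.
have ltm : forall i, (`|(v i ord0 %% D i i)%Z|%N < dm i)%N.
  move=> i; have := ltz_mod (v i ord0) (Dnz i); have := modz_ge0 (v i ord0) (Dnz i).
  rewrite /dm; lia.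
pose t : dT := finfun (fun i => (Ordinal (ltm i) : 'I_(dm i))).
exists (enum_rank t); rewrite enum_rankK; apply/lat_diagP => i.
rewrite !mxE ffunE /= gez0_abs ?modz_ge0 //.
by rewrite {1}(divz_eq (v i ord0) (D i i)) addrK dvdz_mull.
Qed.
End Diag.
Lemma absz_prod (I : finType) (F : I -> int) :
  absz (\prod_i F i) = (\prod_i absz (F i))%N.
Proof. by apply: (big_morph absz abszM). Qed.

Lemma unit_int_abs (x : int) : x \is a GRing.unit -> `|x|%N = 1%N.
Proof. by rewrite [_ \is a _]/= /GRing.unit /=; case/orP => /eqP ->. Qed.

Lemma idx_det d (Y : 'M[int]_d) : \det Y != 0 -> idx_is (lat Y) `|\det Y|%N.
Proof.
move=> dY.
case: (int_Smith_normal_form Y) => L0 uL [R0 uR [s _ E]].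
set D := \matrix_(i, j) _ in E.
have Ddiag : forall i j, i != j -> D i j = 0.
  by move=> i j ij; rewrite mxE; case: eqP => //= eij; move: ij; rewrite (val_inj eij) eqxx.
have trD : is_trig_mx D.
  by apply/is_trig_mxP => i j ij; apply: Ddiag; apply/negP => /eqP E1; rewrite E1 ltnn in ij.
have detE : \det Y = \det L0 * \prod_i D i i * \det R0.
  by rewrite E !det_mulmx (det_trig trD).
have Dnz : forall i, D i i != 0.
  move=> i; apply: contra dY => /eqP Di; rewrite detE (bigD1 i) //= Di.
  by rewrite mul0r mulr0 mul0r.
have -> : `|\det Y|%N = (\prod_i dm D i)%N.
  rewrite detE !abszM absz_prod.
  rewrite unitmxE in uL; rewrite unitmxE in uR.
  by rewrite (unit_int_abs uL) (unit_int_abs uR) mul1n muln1.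
rewrite E; apply: idx_transfer => //; exact: idx_diag.
Qed.
Section Interface.
Variables (d N : nat) (phi : 'I_d -> 'I_N).
Hypothesis phi_inj : injective phi.

Definition Sphi : {set 'I_N} := phi @: [set: 'I_d].

Definition Ymx (R' : Type) (X : 'M[R']_(d, N)) : 'M[R']_d := \matrix_(i, t) X i (phi t).

Definition extend (T : Type) (g : 'I_d -> T) (x0 : T) (e : 'I_N) : T :=
  if [pick t | phi t == e] is Some t then g t else x0.

Lemma extendE T g (x0 : T) t : extend g x0 (phi t) = g t.
Proof.
rewrite /extend; case: pickP => [t' /eqP /phi_inj -> //|].
by move/(_ t); rewrite eqxx.
Qed.

Lemma sum_Sphi (R' : comNzRingType) (M : 'M[R']_(d, N)) (c : 'I_N -> R') :
  \sum_(e in Sphi) c e *: col e M = Ymx M *m \col_t c (phi t).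
Proof.
rewrite big_imset /=; last by move=> x y _ _; apply: phi_inj.
apply/matrixP => i j; rewrite summxE !mxE.
rewrite (eq_bigl (fun _ => true)); last by move=> t; rewrite in_setT.
by apply: eq_bigr => t _; rewrite !mxE mulrC.
Qed.

Lemma int_spanP (X : 'M[int]_(d, N)) v : in_int_span X Sphi v <-> lat (Ymx X) v.
Proof.
split.
  by move=> [c ->]; rewrite sum_Sphi; exists (\col_t c (phi t)).
move=> [c ->]; exists (extend (fun t => c t ord0) 0); rewrite sum_Sphi.
congr (_ *m _); apply/matrixP => i j; rewrite (ord1 j) mxE.
by rewrite extendE.
Qed.

Lemma toR_Ymx (X : 'M[int]_(d, N)) : toR (Ymx X) = Ymx (toR X).
Proof. by apply/matrixP => i j; rewrite !mxE. Qed.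

Lemma real_span_full (X : 'M[int]_(d, N)) v :
  \det (Ymx X) != 0 -> in_real_span X Sphi v.
Proof.
move=> dY.
have uY : toR (Ymx X) \in unitmx.
  by rewrite unitmxE unitfE /toR det_map_mx intr_eq0.
pose c := invmx (toR (Ymx X)) *m toR v.
exists (extend (fun t => c t ord0) 0); rewrite sum_Sphi -toR_Ymx.
have -> : \col_t extend (fun t0 => c t0 ord0) 0 (phi t) = c.
  by apply/matrixP => i j; rewrite (ord1 j) mxE extendE.
by rewrite /c mulKVmx.
Qed.

End Interface.
Section Interface2.
Variables (d N : nat) (phi : 'I_d -> 'I_N).
Hypothesis phi_inj : injective phi.

Lemma arank_phi (X : 'M[int]_(d, N)) :
  arank X (Sphi phi) = \rank (toR (Ymx phi X)).
Proof.
pose E : 'M[int]_(d, N) := \matrix_(t, j) ((phi t == j)%:R).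
have ME : \matrix_(i < d, j < N) (if j \in Sphi phi then X i j else 0) = Ymx phi X *m E.
  apply/matrixP => i j; rewrite !mxE.
  case: ifP => [/imsetP [t _ ->]|nS].
    rewrite (bigD1 t) //= !mxE eqxx mulr1 big1 ?addr0 // => t' tt'.
    by rewrite !mxE (inj_eq phi_inj) (negbTE tt') mulr0.
  rewrite big1 // => t _; rewrite !mxE; case: eqP => [ej|]; last by rewrite mulr0.
  by move: nS; rewrite -ej imset_f ?in_setT.
rewrite /arank ME /toR map_mxM mxrankMfree //.
apply/row_freeP; exists (map_mx (fun z : int => z%:~R) E)^T.
apply/matrixP => t t'; rewrite !mxE.
rewrite (bigD1 (phi t)) //= !mxE eqxx big1 ?addr0.
  by rewrite (inj_eq phi_inj) eq_sym; case: eqP => _; rewrite ?mulr1n ?mulr0n /= ?mulr1 ?mulr0.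
by move=> j jt; rewrite !mxE eq_sym (negbTE jt) mul0r.
Qed.

Lemma rank_det (X : 'M[int]_(d, N)) :
  (arank X (Sphi phi) == d) = (\det (Ymx phi X) != 0).
Proof.
rewrite arank_phi.
have -> : (\rank (toR (Ymx phi X)) == d) = row_free (toR (Ymx phi X)) by [].
by rewrite row_free_unit unitmxE unitfE /toR det_map_mx intr_eq0.
Qed.

Lemma amultP (X : 'M[int]_(d, N)) k : \det (Ymx phi X) != 0 ->
  amult_is X (Sphi phi) k <-> idx_is (lat (Ymx phi X)) k.
Proof.
move=> dY; split.
  move=> [f [_ finj fcov]]; exists f; split.
    by move=> a b /(int_spanP phi_inj) /finj.
  move=> v; have [a Ha] := fcov v (real_span_full phi_inj v dY).
  by exists a; apply/(int_spanP phi_inj).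
move=> [f [finj fcov]]; exists f; split.
- by move=> a; exact: real_span_full.
- by move=> a b /(int_spanP phi_inj) /finj.
- by move=> v _; have [a Ha] := fcov v; exists a; apply/(int_spanP phi_inj).
Qed.

Lemma det_transfer (X X' : 'M[int]_(d, N)) : same_arith_matroid X X' ->
  `|\det (Ymx phi X)|%N = `|\det (Ymx phi X')|%N.
Proof.
move=> /(_ (Sphi phi)) [Hr Hm].
have Hz : (\det (Ymx phi X) != 0) = (\det (Ymx phi X') != 0).
  by rewrite -!rank_det Hr.
case: (eqVneq (\det (Ymx phi X)) 0) => [E0|nz].
  move: Hz; rewrite E0 eqxx /= => /esym /negbFE /eqP ->.
  by [].
have nz' : \det (Ymx phi X') != 0 by rewrite -Hz.
have H1 := idx_det nz; have H2 := idx_det nz'.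
have /(amultP _ nz') H3 : amult_is X' (Sphi phi) `|\det (Ymx phi X)|%N.
  by apply/Hm; apply/(amultP _ nz).
exact: (idx_uniq (@lat_sub _ _) H3 H2).
Qed.

End Interface2.
Definition sdiag (R' : nzRingType) n (e : 'I_n -> R') : 'M[R']_n :=
  \matrix_(i, j) (e i *+ (i == j)).

Lemma mul_sdiag (R' : comNzRingType) m n (M : 'M[R']_(m, n)) e i j :
  (M *m sdiag e) i j = M i j * e j.
Proof.
rewrite mxE (bigD1 j) //= mxE eqxx mulr1n big1 ?addr0 // => k kj.
by rewrite mxE (negbTE kj) mulr0n mulr0.
Qed.

Lemma sdiag_mul (R' : comNzRingType) m n (M : 'M[R']_(m, n)) e i j :
  (sdiag e *m M) i j = e i * M i j.
Proof.
rewrite mxE (bigD1 i) //= mxE eqxx mulr1n big1 ?addr0 // => k kj.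
by rewrite mxE eq_sym (negbTE kj) mulr0n mul0r.
Qed.

Lemma sdiag_sq (R' : comNzRingType) n (e : 'I_n -> R') :
  (forall j, e j * e j = 1) -> sdiag e *m sdiag e = 1%:M.
Proof.
move=> e2; apply/matrixP => i j; rewrite mul_sdiag !mxE.
by case: eqP => [->|]; rewrite ?mulr1n ?mulr0n ?mul0r // e2.
Qed.

Lemma col_mulmx (R' : comNzRingType) m n p (A : 'M[R']_(m, n)) (B : 'M[R']_(n, p)) j :
  col j (A *m B) = A *m col j B.
Proof. by apply/matrixP => i k; rewrite !mxE; apply: eq_bigr => l _; rewrite !mxE. Qed.

Lemma sum_scale (R' : comNzRingType) d N (Du : 'M[R']_d) (M : 'M[R']_(d, N))
  (e : 'I_N -> R') (S : {set 'I_N}) (c : 'I_N -> R') :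
  \sum_(j in S) c j *: col j (Du *m M *m sdiag e) =
  Du *m \sum_(j in S) (c j * e j) *: col j M.
Proof.
rewrite mulmx_sumr; apply: eq_bigr => j _.
have -> : col j (Du *m M *m sdiag e) = e j *: (Du *m col j M).
  by apply/matrixP => i k; rewrite mxE mul_sdiag -col_mulmx !mxE mulrC.
by rewrite scalerA -scalemxAr.
Qed.

Lemma toR_mul d m n (A : 'M[int]_(d, m)) (B : 'M[int]_(m, n)) :
  toR (A *m B) = toR A *m toR B.
Proof. by rewrite /toR map_mxM. Qed.

Lemma toR_sdiag n (e : 'I_n -> int) : toR (sdiag e) = sdiag (fun j => (e j)%:~R).
Proof. by apply/matrixP => i j; rewrite !mxE rmorphMn. Qed.

Section Scale.
Variables (d N : nat) (a : 'I_d -> int) (e : 'I_N -> int).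
Hypothesis a2 : forall i, a i * a i = 1.
Hypothesis e2 : forall j, e j * e j = 1.

Definition scaleX (X : 'M[int]_(d, N)) := sdiag a *m X *m sdiag e.

Lemma scaleXK X : scaleX (scaleX X) = X.
Proof.
rewrite /scaleX !mulmxA (sdiag_sq a2) mul1mx -!mulmxA (sdiag_sq e2) mulmx1.
by [].
Qed.

Lemma int_span_scale X S v :
  in_int_span (scaleX X) S v <-> in_int_span X S (sdiag a *m v).
Proof.
split.
  move=> [c ->]; exists (fun j => c j * e j).
  by rewrite sum_scale mulmxA (sdiag_sq a2) mul1mx.
move=> [c H]; exists (fun j => c j * e j); rewrite sum_scale.
have -> : \sum_(j in S) (c j * e j * e j) *: col j X = \sum_(j in S) c j *: col j X.
  by apply: eq_bigr => j _; rewrite -mulrA e2 mulr1.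
by rewrite -H mulmxA (sdiag_sq a2) mul1mx.
Qed.

Lemma real_span_scale X S v :
  in_real_span (scaleX X) S v <-> in_real_span X S (sdiag a *m v).
Proof.
have aR2 : forall i, (a i)%:~R * (a i)%:~R = 1 :> R.
  by move=> i; rewrite -intrM a2.
have eR2 : forall i, (e i)%:~R * (e i)%:~R = 1 :> R.
  by move=> i; rewrite -intrM e2.
rewrite /in_real_span /scaleX !toR_mul !toR_sdiag.
split.
  move=> [c ->]; exists (fun j => c j * (e j)%:~R).
  by rewrite sum_scale mulmxA (sdiag_sq aR2) mul1mx.
move=> [c H]; exists (fun j => c j * (e j)%:~R); rewrite sum_scale.
have -> : \sum_(j in S) (c j * (e j)%:~R * (e j)%:~R) *: col j (toR X) =
          \sum_(j in S) c j *: col j (toR X).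
  by apply: eq_bigr => j _; rewrite -mulrA eR2 mulr1.
by rewrite -H mulmxA (sdiag_sq aR2) mul1mx.
Qed.

Lemma amult_scale X S k : amult_is X S k -> amult_is (scaleX X) S k.
Proof.
move=> [f [frs finj fcov]]; exists (fun i => sdiag a *m f i); split.
- by move=> i; apply/real_span_scale; rewrite mulmxA (sdiag_sq a2) mul1mx.
- move=> i j /int_span_scale; rewrite mulmxBr !mulmxA (sdiag_sq a2) !mul1mx.
  exact: finj.
- move=> v /real_span_scale /fcov [i Hi]; exists i; apply/int_span_scale.
  by rewrite mulmxBr mulmxA (sdiag_sq a2) mul1mx.
Qed.

Lemma arank_scale X S : arank (scaleX X) S = arank X S.
Proof.
have aR2 : forall i, (a i)%:~R * (a i)%:~R = 1 :> R.
  by move=> i; rewrite -intrM a2.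
have eR2 : forall i, (e i)%:~R * (e i)%:~R = 1 :> R.
  by move=> i; rewrite -intrM e2.
rewrite /arank.
have -> : \matrix_(i < d, j < N) (if j \in S then scaleX X i j else 0) =
   scaleX (\matrix_(i < d, j < N) (if j \in S then X i j else 0)).
  apply/matrixP => i j; rewrite /scaleX mxE mul_sdiag mul_sdiag sdiag_mul sdiag_mul mxE.
  by case: ifP; rewrite ?mulr0 ?mul0r.
rewrite /scaleX !toR_mul !toR_sdiag mxrankMfree; last first.
  by apply/row_freeP; exists (sdiag (fun j => (e j)%:~R : R)); rewrite sdiag_sq.
have full : row_full (sdiag (fun j => (a j)%:~R : R)).
  rewrite row_full_unit -row_free_unit.
  by apply/row_freeP; exists (sdiag (fun j => (a j)%:~R : R)); rewrite sdiag_sq.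
by rewrite (eqmxMfull _ full).
Qed.

Lemma same_scale X : same_arith_matroid (scaleX X) X.
Proof.
move=> S; split; first exact: arank_scale.
move=> k; split; last exact: amult_scale.
by move=> /amult_scale; rewrite scaleXK.
Qed.

End Scale.
Section Entry.
Variables (d n : nat) (B : 'M[int]_d).
Hypothesis Bdiag : forall i j, i != j -> B i j = 0.

Definition phiE (i0 : 'I_d) (j0 : 'I_n) (t : 'I_d) : 'I_(d + n) :=
  if t == i0 then rshift d j0 else lshift n t.

Lemma phiE_inj i0 j0 : injective (phiE i0 j0).
Proof.
move=> t t'; rewrite /phiE.
case: eqP => [->|_]; case: eqP => [->|_] //.
- by move=> /eqP; rewrite eq_sym eq_lrshift.
- by move=> /eqP; rewrite eq_lrshift.
- exact: lshift_inj.
Qed.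

Lemma det_entry (A : 'M[int]_(d, n)) i0 j0 :
  \det (Ymx (phiE i0 j0) (row_mx B A)) = (\prod_(t | t != i0) B t t) * A i0 j0.
Proof.
rewrite /determinant (bigD1 (1%g : 'S_d)) //=.
rewrite [X in _ + X]big1 ?addr0; last first.
  move=> s s1; apply/eqP; rewrite mulf_eq0; apply/orP; right.
  rewrite prodf_seq_eq0; apply/hasP.
  have [i Hi] : exists i, s i != i.
    apply/existsP; move: s1; apply: contraR; rewrite negb_exists => /forallP H.
    by apply/eqP/permP => i; rewrite perm1; apply/eqP; have := H i; rewrite negbK.
  case: (eqVneq (s i) i0) => [si0|sni0]; last first.
    exists i; first by rewrite mem_index_enum.
    by rewrite mxE /phiE (negbTE sni0) row_mxEl Bdiag // eq_sym.
  have ni0 : i != i0 by rewrite -si0 eq_sym.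
  case: (eqVneq (s i0) i0) => [s00|s0n].
    by move: ni0; rewrite (perm_inj (etrans si0 (esym s00))) eqxx.
  exists i0; first by rewrite mem_index_enum.
  rewrite mxE /phiE (negbTE s0n) row_mxEl Bdiag // eq_sym.
  exact: s0n.
have -> : ((-1) ^+ (1%g : 'S_d) : int) = 1 by rewrite odd_perm1.
rewrite mul1r (bigD1 i0) //= perm1 mxE /phiE eqxx row_mxEr mulrC.
congr (_ * _); apply: eq_bigr => t tn.
by rewrite perm1 mxE (negbTE tn) row_mxEl.
Qed.

End Entry.
Section Cycle.
Variables (d n k' : nat) (B : 'M[int]_d).
Hypothesis Bdiag : forall i j, i != j -> B i j = 0.
Hypothesis Bnz : forall i, B i i != 0.
Local Notation k := k'.+2.
Variables (r : 'I_k -> 'I_d) (c : 'I_k -> 'I_n).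
Hypothesis rinj : injective r.
Hypothesis cinj : injective c.

Lemma rP t : (exists u, t = r u) \/ (forall u, r u != t).
Proof.
case: (pickP (fun u => r u == t)) => [u /eqP <-|H]; first by left; exists u.
by right => u; rewrite H.
Qed.

Definition phiC (t : 'I_d) : 'I_(d + n) :=
  if [pick u | r u == t] is Some u then rshift d (c u) else lshift n t.

Lemma phiC_r u : phiC (r u) = rshift d (c u).
Proof.
rewrite /phiC; case: pickP => [u' /eqP /rinj -> //|].
by move/(_ u); rewrite eqxx.
Qed.

Lemma phiC_nr t : (forall u, r u != t) -> phiC t = lshift n t.
Proof.
move=> H; rewrite /phiC; case: pickP => [u' Hu|//].
by move: (H u'); rewrite Hu.
Qed.

Lemma phiC_inj : injective phiC.
Proof.
move=> t1 t2.
case: (rP t1) => [[u1 ->]|H1]; case: (rP t2) => [[u2 ->]|H2].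
- by rewrite !phiC_r => /rshift_inj /cinj ->.
- by rewrite phiC_r phiC_nr // => /eqP; rewrite eq_sym eq_lrshift.
- by rewrite phiC_r phiC_nr // => /eqP; rewrite eq_lrshift.
- by rewrite !phiC_nr // => /lshift_inj.
Qed.

Definition sigf (t : 'I_d) : 'I_d :=
  if [pick u | r u == t] is Some u then r (u - 1) else t.

Lemma sigf_r u : sigf (r u) = r (u - 1).
Proof.
rewrite /sigf; case: pickP => [u' /eqP /rinj -> //|].
by move/(_ u); rewrite eqxx.
Qed.

Lemma sigf_nr t : (forall u, r u != t) -> sigf t = t.
Proof.
move=> H; rewrite /sigf; case: pickP => [u' Hu|//].
by move: (H u'); rewrite Hu.
Qed.

Lemma sigf_inj : injective sigf.
Proof.
move=> t1 t2.
case: (rP t1) => [[u1 ->]|H1]; case: (rP t2) => [[u2 ->]|H2].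
- by rewrite !sigf_r => /rinj /addIr ->.
- by rewrite sigf_r sigf_nr // => E; move: (H2 (u1 - 1)); rewrite E eqxx.
- by rewrite sigf_r sigf_nr // => E; move: (H1 (u2 - 1)); rewrite E eqxx.
- by rewrite !sigf_nr.
Qed.

Definition sig : 'S_d := perm sigf_inj.

Lemma one_neq0 : (1 : 'I_k) != 0.
Proof. exact: oner_neq0. Qed.

Lemma sig_neq1 : sig != 1%g.
Proof.
apply/eqP => /permP /(_ (r 0)); rewrite permE perm1 sigf_r => /rinj /eqP.
by rewrite add0r eqr_oppLR oppr0 (negbTE one_neq0).
Qed.

Section Supp.
Variable A : 'M[int]_(d, n).
Hypothesis H3 : forall t u, A (r t) (c u) != 0 -> u = t \/ u = t + 1.

Lemma supp_perm (s : 'S_d) :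
  \prod_t row_mx B A (s t) (phiC t) != 0 -> s = 1%g \/ s = sig.
Proof.
move=> nz.
have nzt : forall t, row_mx B A (s t) (phiC t) != 0.
  move=> t; apply: contra nz => /eqP z; rewrite (bigD1 t) //= z mul0r.
  by [].
have fixA : forall t, (forall u, r u != t) -> s t = t.
  move=> t Ht; have := nzt t; rewrite phiC_nr // row_mxEl.
  by case: (eqVneq (s t) t) => // st; rewrite Bdiag ?eqxx.
have inR : forall u, exists u', s (r u) = r u'.
  move=> u; case: (rP (s (r u))) => [//|H].
  have := fixA _ H => /perm_inj E; move: (H u); by rewrite E eqxx.
have step : forall u, s (r u) = r u \/ s (r u) = r (u - 1).
  move=> u; have [u' E] := inR u.
  have := nzt (r u); rewrite phiC_r row_mxEr E => /H3 [->|->]; first by left.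
  by right; rewrite addrK.
case: (pickP (fun u => s (r u) == r u)) => [u0 /eqP Hu0 | none].
  left.
  have all : forall m : nat, s (r (u0 + m%:R)) = r (u0 + m%:R).
    elim=> [|m IH]; first by rewrite addr0.
    rewrite -natr1 addrA.
    case: (step (u0 + m%:R + 1)) => // E.
    exfalso; move: E; rewrite addrK -IH => /perm_inj /rinj.
    move/eqP; rewrite -subr_eq0 addrAC subrr add0r.
    by rewrite (negbTE one_neq0).
  apply/permP => t; rewrite perm1.
  case: (rP t) => [[u ->]|H]; last exact: fixA.
  have := all (u - u0); rewrite natr_Zp.
  by rewrite addrC subrK.
right; apply/permP => t; rewrite permE.
case: (rP t) => [[u ->]|H]; last by rewrite fixA // sigf_nr.
rewrite sigf_r; case: (step u) => // E.
by move: (none u); rewrite E eqxx.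
Qed.

Lemma trYE (X : 'M[int]_(d, d + n)) t i : (Ymx phiC X)^T t i = X i (phiC t).
Proof. by rewrite !mxE. Qed.

Definition term (s : 'S_d) := (-1) ^+ s * \prod_t row_mx B A (s t) (phiC t).

Lemma det_cycle : \det (Ymx phiC (row_mx B A)) = term 1%g + term sig.
Proof.
rewrite -det_tr /determinant (bigD1 (1%g : 'S_d)) //= (bigD1 sig) /=; last first.
  by rewrite sig_neq1.
rewrite [X in _ + (_ + X)]big1 ?addr0.
  by rewrite /term; congr (_ * _ + _ * _); apply: eq_bigr => t _; rewrite trYE.
move=> s /andP [s1 ssig].
under eq_bigr do rewrite trYE.
case: (eqVneq (\prod_t row_mx B A (s t) (phiC t)) 0) => [->|nz]; first by rewrite mulr0.
by case: (supp_perm nz) => E; [move: s1 | move: ssig]; rewrite E eqxx.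
Qed.

End Supp.

Lemma cycle_contra (A1 A2 : 'M[int]_(d, n)) :
  (forall t u, A1 (r t) (c u) != 0 -> u = t \/ u = t + 1) ->
  (forall i j, (A1 i j == 0) = (A2 i j == 0)) ->
  (forall u, A2 (r u) (c u) = A1 (r u) (c u)) ->
  (forall u, u != 0 -> A2 (r (u - 1)) (c u) = A1 (r (u - 1)) (c u)) ->
  A2 (r (0 - 1)) (c 0) = - A1 (r (0 - 1)) (c 0) ->
  (forall u, A1 (r u) (c u) != 0) ->
  (forall u, A1 (r (u - 1)) (c u) != 0) ->
  `|\det (Ymx phiC (row_mx B A1))|%N = `|\det (Ymx phiC (row_mx B A2))|%N ->
  False.
Proof.
move=> H3 supp Ha Hb Hc nz1 nz2 Habs.
have H3' : forall t u, A2 (r t) (c u) != 0 -> u = t \/ u = t + 1.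
  by move=> t u; rewrite -supp; exact: H3.
rewrite (det_cycle H3) (det_cycle H3') in Habs.
have ea : term A2 1%g = term A1 1%g.
  rewrite /term; congr (_ * _); apply: eq_bigr => t _; rewrite perm1.
  case: (rP t) => [[u ->]|H]; first by rewrite phiC_r !row_mxEr Ha.
  by rewrite phiC_nr // !row_mxEl.
have eb : term A2 sig = - term A1 sig.
  rewrite /term -mulrN; congr (_ * _).
  rewrite (bigD1 (r 0)) //= [X in _ = - X](bigD1 (r 0)) //= -mulNr.
  congr (_ * _); first by rewrite permE sigf_r phiC_r !row_mxEr Hc.
  apply: eq_bigr => t tn.
  case: (rP t) => [[u Eu]|H].
    rewrite Eu permE sigf_r phiC_r !row_mxEr Hb //.
    by apply: contra tn => /eqP u0; rewrite Eu u0.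
  by rewrite permE sigf_nr // phiC_nr // !row_mxEl.
have a_nz : term A1 1%g != 0.
  rewrite /term mulf_neq0 ?signr_eq0 //; apply/prodf_neq0 => t _; rewrite perm1.
  case: (rP t) => [[u ->]|H]; first by rewrite phiC_r row_mxEr.
  by rewrite phiC_nr // row_mxEl.
have b_nz : term A1 sig != 0.
  rewrite /term mulf_neq0 ?signr_eq0 //; apply/prodf_neq0 => t _; rewrite permE.
  case: (rP t) => [[u ->]|H]; first by rewrite sigf_r phiC_r row_mxEr.
  by rewrite sigf_nr // phiC_nr // row_mxEl.
rewrite ea eb in Habs.
move: Habs a_nz b_nz; set x := term A1 1%g; set y := term A1 sig.
move=> Habs /eqP xn /eqP yn; lia.
Qed.

End Cycle.
Section Graph.
Variables (d n : nat).
Local Notation V := ('I_d + 'I_n)%type.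

Lemma bip_sym (E : {set 'I_d * 'I_n}) : symmetric (bip_adj E).
Proof. by move=> [x|x] [y|y]. Qed.

Lemma bip_sub (E E' : {set 'I_d * 'I_n}) : E \subset E' -> subrel (bip_adj E) (bip_adj E').
Proof. by move=> /subsetP H [x|x] [y|y] //= /H. Qed.

Lemma connect_cycle (P : {set 'I_d * 'I_n}) i j :
  (i, j) \in P -> connect (bip_adj (P :\ (i, j))) (inr j) (inl i) -> has_cycle P.
Proof.
move=> ijP /connectP [s ps ls].
move: ls; case: (shortenP ps) => s' ps' us' _ ls'.
exists (inr j :: s'); split => //.
- case: s' ps' us' ls' => [|x [|y s']] //= ps' us' ls'.
  by move: ps'; rewrite /= -ls' /= !inE eqxx.
- rewrite /= rcons_path -ls' /= ijP andbT.
  by apply: sub_path ps'; apply: bip_sub; apply: subD1set.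
Qed.

Lemma forest_sign (P : {set 'I_d * 'I_n}) :
  ~ has_cycle P -> forall tau : 'I_d * 'I_n -> bool,
  exists (al : 'I_d -> bool) (be : 'I_n -> bool),
    forall p, p \in P -> al p.1 (+) be p.2 = tau p.
Proof.
move: {2}#|P| (erefl #|P|) => m; elim: m P => [|m IH] P cP nc tau.
  exists (fun _ => false), (fun _ => false) => p pP.
  by move: cP; rewrite (cardD1 p) pP.
have [p0 p0P] : exists p0, p0 \in P.
  by apply/set0Pn; rewrite -card_gt0 cP.
case: p0 p0P => i j ijP.
set P' := P :\ (i, j).
have cP' : #|P'| = m by move: cP; rewrite (cardsD1 (i, j)) ijP add1n => -[].
have nc' : ~ has_cycle P'.
  move=> [s [ss us cs]]; apply: nc; exists s; split => //.
  by apply: sub_cycle cs; apply: bip_sub; apply: subD1set.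
have [al [be H]] := IH P' cP' nc' tau.
set C := connect (bip_adj P') (inr j).
have nCi : ~~ C (inl i) by apply/negP => /(connect_cycle ijP).
set fl := tau (i, j) (+) al i (+) be j.
exists (fun x => al x (+) (fl && C (inl x))), (fun y => be y (+) (fl && C (inr y))).
move=> [x y] /= xyP.
case: (eqVneq (x, y) (i, j)) => [[-> ->]|ne].
  rewrite (negbTE nCi) /C connect0 andbF andbT addbF /fl.
  by case: (al i); case: (be j); case: (tau (i, j)).
have xyP' : (x, y) \in P' by rewrite !inE ne.
have -> : C (inl x) = C (inr y).
  apply/idP/idP => Hc.
    by apply: connect_trans Hc (connect1 _).
  by apply: connect_trans Hc (connect1 _); rewrite bip_sym.
rewrite -(H _ xyP') /=.
by case: (al x); case: (be y); case: (fl && C (inr y)).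
Qed.

End Graph.
Lemma valZ_add1 k' (t : 'I_k'.+2) : val (t + 1) = if t.+1 == k'.+2 then 0%N else t.+1.
Proof.
rewrite /= /GRing.add /= (@modn_small 1) // addn1.
case: eqP => [->|ne]; first by rewrite modnn.
by rewrite modn_small //; have := ltn_ord t; rewrite leq_eqVlt => /orP [/eqP|].
Qed.

Lemma valZ_sub1 k' (t : 'I_k'.+2) : val (t - 1) = if t == 0 then k'.+1 else t.-1.
Proof.
have := valZ_add1 (t - 1); rewrite subrK.
have := ltn_ord (t - 1).
case: (t =P 0) => [->|ne] /=; case: eqP => //= E1 lt E2; try lia.
by exfalso; apply: ne; apply: val_inj; rewrite /= E2.
Qed.
From Stdlib Require Import Classical.

Lemma min_ex (Q : nat -> Prop) m0 : Q m0 ->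
  exists m, Q m /\ forall m', (m' < m)%N -> ~ Q m'.
Proof.
elim: m0 {-2}m0 (leqnn m0) => [|N IH] m0 le Qm.
  by exists m0; split => // m' lt; lia.
case: (classic (exists m', (m' < m0)%N /\ Q m')) => [[m' [lt Qm']]|H].
  by apply: (IH m') => //; lia.
by exists m0; split => // m' lt Qm'; apply: H; exists m'.
Qed.

Section Extract.
Variables (d n : nat).
Local Notation V := ('I_d + 'I_n)%type.

Definition fpath (e : rel V) (m : nat) (x y : V) :=
  exists v : nat -> V,
    [/\ v 0%N = x, v m = y & forall a, (a < m)%N -> e (v a) (v a.+1)].

Lemma fpath_edge (e : rel V) x y : e x y -> fpath e 1 x y.
Proof.
move=> H; exists (fun t => if t == 0%N then x else y); split => // a.
by rewrite ltnS leqn0 => /eqP ->.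
Qed.

Lemma fpath_cat (e : rel V) m1 m2 x y z :
  fpath e m1 x y -> fpath e m2 y z -> fpath e (m1 + m2)%N x z.
Proof.
move=> [v1 [a1 b1 H1]] [v2 [a2 b2 H2]].
exists (fun t => if (t <= m1)%N then v1 t else v2 (t - m1)%N); split.
- by rewrite leq0n.
- case: ifP => h.
    have m20 : m2 = 0%N by lia.
    by move: b2; rewrite m20 addn0 b1 a2.
  by rewrite addKn.
- move=> a am; case: ifP => h1; case: ifP => h2.
  + by apply: H1; lia.
  + have ea : a = m1 by lia.
    rewrite ea b1 -a2 (_ : (m1.+1 - m1)%N = 1%N); last lia.
    by apply: H2; lia.
  + exfalso; lia.
  + rewrite subSn; last lia.
    by apply: H2; lia.
Qed.

Lemma fpath_rev (e : rel V) m x y : symmetric e -> fpath e m x y -> fpath e m y x.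
Proof.
move=> se [v [a b H]]; exists (fun t => v (m - t)%N); split.
- by rewrite subn0.
- by rewrite subnn.
- move=> t tm; rewrite se -(subnSK tm); apply: H; lia.
Qed.

Lemma fpath_subv (e : rel V) m (v : nat -> V) a b :
  (forall t, (t < m)%N -> e (v t) (v t.+1)) -> (a <= b)%N -> (b <= m)%N ->
  fpath e (b - a)%N (v a) (v b).
Proof.
move=> H ab bm; exists (fun t => v (a + t)%N); split.
- by rewrite addn0.
- by rewrite subnKC.
- by move=> t tl; rewrite addnS; apply: H; lia.
Qed.

Lemma fpath_mono (e e' : rel V) m x y : subrel e e' -> fpath e m x y -> fpath e' m x y.
Proof. by move=> sub [v [a b H]]; exists v; split => // t /H /sub. Qed.

Definition isl (x : V) := if x is inl _ then true else false.

Lemma bip_alt (X : {set 'I_d * 'I_n}) x y : bip_adj X x y -> isl y = ~~ isl x.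
Proof. by case: x; case: y. Qed.

Variables (E Dl P : {set 'I_d * 'I_n}).
Hypothesis PE : P \subset E.
Hypothesis PD : forall p, p \in P -> p \notin Dl.
Hypothesis DE : Dl \subset E.
Hypothesis Pconn : forall u v, connect (bip_adj P) u v = connect (bip_adj E) u v.
Local Notation F := (E :\: Dl).

Definition Qp m := exists i j, (i, j) \in Dl /\ fpath (bip_adj F) m (inr j) (inl i).

Lemma Q_of_adj m x y : fpath (bip_adj F) m x y -> bip_adj Dl x y -> Qp m.
Proof.
case: x => x; case: y => y //= fp xy.
  by exists x, y; split => //; apply: fpath_rev fp; apply: bip_sym.
by exists y, x.
Qed.

Lemma Q_ex : Dl != set0 -> exists m, Qp m.
Proof.
case/set0Pn => [[i0 j0] ijD].
have cE : connect (bip_adj E) (inr j0) (inl i0).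
  by apply: connect1 => /=; apply: (subsetP DE).
rewrite -Pconn in cE; case/connectP: cE => s ps ls.
exists (size s), i0, j0; split => //.
apply: (@fpath_mono (bip_adj P)).
  apply: bip_sub; apply/subsetP => p pP; rewrite inE (subsetP PE) // andbT.
  exact: PD.
exists (fun t => nth (inr j0) (inr j0 :: s) t); split => //.
  by rewrite ls (last_nth (inr j0)).
by move=> a am; move/pathP: ps => /(_ (inr j0) a am).
Qed.

Lemma bipF x y : bip_adj E x y -> ~~ bip_adj Dl x y -> bip_adj F x y.
Proof. by case: x => x; case: y => y //= H1 H2; rewrite inE H1 H2. Qed.

Lemma extract : Dl != set0 ->
  exists k' (r : 'I_k'.+2 -> 'I_d) (c : 'I_k'.+2 -> 'I_n),
  [/\ injective r, injective c,
   forall t u, (r t, c u) \in E -> u = t \/ u = t + 1 &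
   [/\ forall u, (r u, c u) \in F,
   forall u, u != 0 -> (r (u - 1), c u) \in F &
   (r (0 - 1), c 0) \in Dl]].
Proof.
move=> Dn.
have [m0 Qm0] := Q_ex Dn; have [m [Qm minm]] := min_ex Qm0.
case: Qm => i0 [j0 [ijD [v [v0 vm vF]]]].
have noQ : forall m' x y, (m' < m)%N -> fpath (bip_adj F) m' x y -> bip_adj Dl x y -> False.
  by move=> m' x y lt fp xy; apply: (minm m' lt); apply: Q_of_adj fp xy.
have par : forall a, (a <= m)%N -> isl (v a) = odd a.
  elim=> [|a IH] am; first by rewrite v0.
  by rewrite (bip_alt (vF a am)) IH ?oddS //; lia.
have modd : odd m by rewrite -par // vm.
have m1 : m <> 1%N.
  move=> m1; have h := vF 0%N (ltac:(lia)).
  have e1 : v 1%N = inl i0 by rewrite -m1.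
  by rewrite v0 e1 /= inE ijD in h.
have dist : forall a b, (a < b)%N -> (b <= m)%N -> v a <> v b.
  move=> a b ab bm vab.
  have p1 := @fpath_subv _ _ v 0%N a vF (leq0n a) (ltac:(lia)).
  have p2 := @fpath_subv _ _ v b m vF bm (leqnn m).
  rewrite -vab in p2; have p := fpath_cat p1 p2.
  rewrite v0 vm subn0 in p.
  by apply: (minm (a + (m - b))%N); [lia | exists i0, j0].
have chord : forall a b, (a.+1 < b)%N -> (b <= m)%N -> (a != 0%N) || (b != m) ->
    ~~ bip_adj E (v a) (v b).
  move=> a b ab bm abm; apply/negP => adjE.
  case: (boolP (bip_adj Dl (v a) (v b))) => hD.
    have p := @fpath_subv _ _ v a b vF (ltac:(lia)) bm.
    by apply: (noQ _ _ _ _ p hD); lia.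
  have p1 := @fpath_subv _ _ v 0%N a vF (leq0n a) (ltac:(lia)).
  have p2 := @fpath_subv _ _ v b m vF bm (leqnn m).
  have pe := fpath_edge (bipF adjE hD).
  have p := fpath_cat (fpath_cat p1 pe) p2.
  rewrite v0 vm subn0 in p.
  by apply: (minm (a + 1 + (m - b))%N); [lia | exists i0, j0].
have [k' mE] : exists k', m = (k'.*2 + 3)%N.
  have h := odd_double_half m; rewrite modd in h.
  exists (m./2 - 1)%N; lia.
pose r (t : 'I_k'.+2) := if v (t.*2.+1) is inl i then i else i0.
pose c (t : 'I_k'.+2) := if v (t.*2) is inr j then j else j0.
have vr : forall t : 'I_k'.+2, v (t.*2.+1) = inl (r t).
  move=> t; have := par (t.*2.+1) (ltac:(have := ltn_ord t; lia)).
  rewrite /r /= odd_double; case: (v _) => //.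
have vc : forall t : 'I_k'.+2, v (t.*2) = inr (c t).
  move=> t; have := par (t.*2) (ltac:(have := ltn_ord t; lia)).
  rewrite /c /= odd_double; case: (v _) => //.
have ltm : forall t : 'I_k'.+2, (t.*2.+1 <= m)%N.
  by move=> t; have := ltn_ord t; lia.
exists k', r, c; split.
- move=> t u rtu; apply/val_inj/eqP; case: (ltngtP t u) => // h; exfalso.
    by apply: (dist (t.*2.+1) (u.*2.+1)); [lia | apply: ltm | rewrite !vr rtu].
  by apply: (dist (u.*2.+1) (t.*2.+1)); [lia | apply: ltm | rewrite !vr rtu].
- move=> t u ctu; apply/val_inj/eqP; case: (ltngtP t u) => // h; exfalso.
    by apply: (dist (t.*2) (u.*2)); [lia | have := ltm u; lia | rewrite !vc ctu].
  by apply: (dist (u.*2) (t.*2)); [lia | have := ltm t; lia | rewrite !vc ctu].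
- move=> t u tuE.
  have adj : bip_adj E (v (t.*2.+1)) (v (u.*2)) by rewrite vr vc.
  have ht := ltn_ord t; have hu := ltn_ord u.
  case: (ltngtP (u.*2) (t.*2.+1)) => h.
  + case: (boolP ((u.*2).+1 < t.*2.+1)%N) => h2.
      case: (boolP ((u.*2 != 0%N) || (t.*2.+1 != m))) => h3.
        by move: (chord _ _ h2 (ltm t) h3); rewrite bip_sym adj.
      right; apply/val_inj; rewrite valZ_add1 /=.
      move: h3; rewrite negb_or !negbK => /andP [/eqP h4 /eqP h5].
      rewrite ifT; [lia | apply/eqP; lia].
    by left; apply/val_inj => /=; lia.
  + case: (boolP ((t.*2.+1).+1 < u.*2)%N) => h2.
      by move: (chord _ _ h2 (ltac:(have := ltm u; lia)) isT); rewrite adj.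
    right; apply/val_inj; rewrite valZ_add1 /= ifF; [lia | apply/eqP; lia].
  + exfalso; lia.
- split.
  + move=> u; have := vF (u.*2) (ltac:(have := ltm u; lia)).
    by rewrite vc -[(u.*2).+1]/(u.*2.+1) vr.
  + move=> u u0; have h1' := valZ_sub1 u; rewrite (negbTE u0) in h1'.
    have h1 : nat_of_ord ((u - 1)%R : 'I_k'.+2) = u.-1 := h1'.
    have u0' : (0 < u)%N by rewrite lt0n; apply: contra u0 => /eqP h; apply/eqP/val_inj.
    have := vF (((u - 1)%R : 'I_k'.+2).*2.+1) (ltac:(have := ltm u; lia)).
    rewrite vr (_ : (((u - 1)%R : 'I_k'.+2).*2.+2 = u.*2)%N); last by rewrite h1; lia.
    by rewrite vc.
  + have h1 := valZ_sub1 (0 : 'I_k'.+2); rewrite eqxx in h1.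
    have e1 : r (0 - 1) = i0.
      have := vr (0 - 1); rewrite h1 (_ : (k'.+1.*2.+1 = m)%N); last lia.
      by rewrite vm => -[].
    have e2 : c 0 = j0 by have := vc 0; rewrite v0 => -[].
    by rewrite e1 e2.
Qed.

End Extract.
Section Main.
Variables (d n : nat) (B : 'M[int]_d).
Hypothesis Bdiag : forall i j, i != j -> B i j = 0.
Hypothesis Bnz : forall i, B i i != 0.

Lemma abs_entries (A1 A : 'M[int]_(d, n)) :
  same_arith_matroid (row_mx B A1) (row_mx B A) -> forall i j, `|A1 i j|%N = `|A i j|%N.
Proof.
move=> H i j; have := det_transfer (@phiE_inj d n i j) H.
rewrite !(det_entry Bdiag) !abszM => E.
have pos : (0 < absz (\prod_(t | t != i) B t t)%R)%N.
  by rewrite absz_gt0; apply/prodf_neq0 => t _.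
by apply/eqP; rewrite -(eqn_pmul2l pos) E.
Qed.

Lemma abs_eq_cases (x y : int) : `|x|%N = `|y|%N -> x = y \/ y = - x.
Proof. move=> H; lia. Qed.

Lemma abs_pos_eq (a b : int) : `|a|%N = `|b|%N -> 0 < a -> 0 < b -> a = b.
Proof. move=> h x y; lia. Qed.

Lemma abs_neg_eq (a b : int) : `|a|%N = `|b|%N -> a < 0 -> b < 0 -> a = b.
Proof. move=> h x y; lia. Qed.

Lemma uniq_part (A A1 A2 : 'M[int]_(d, n)) P sigma :
  coordinatizing_path A P -> has_signs A1 P sigma -> has_signs A2 P sigma ->
  same_arith_matroid (row_mx B A1) (row_mx B A) ->
  same_arith_matroid (row_mx B A2) (row_mx B A) -> A1 = A2.
Proof.
move=> [PE nc Pconn] s1 s2 h1 h2.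
have a1 := abs_entries h1; have a2 := abs_entries h2.
have a12 : forall i j, `|A1 i j|%N = `|A2 i j|%N by move=> i j; rewrite a1 a2.
have z1 : forall i j, (A1 i j == 0) = (A i j == 0) by move=> i j; rewrite -!absz_eq0 a1.
have z12 : forall i j, (A1 i j == 0) = (A2 i j == 0) by move=> i j; rewrite -!absz_eq0 a12.
set E := support_entries A.
set Dl := [set p : 'I_d * 'I_n | A1 p.1 p.2 != A2 p.1 p.2].
have PD : forall p, p \in P -> p \notin Dl.
  move=> p pP; rewrite inE negbK; have := s1 p pP; have := s2 p pP.
  have := a12 p.1 p.2; case: (sigma p) => h x y; apply/eqP.
    exact: (abs_pos_eq h y x).
  exact: (abs_neg_eq h y x).
have DE : Dl \subset E.
  apply/subsetP => p; rewrite !inE -z1; apply: contra => /eqP z.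
  by move: (z12 p.1 p.2); rewrite z eqxx => /esym /eqP ->.
have inE1 : forall i j, ((i, j) \in E) = (A1 i j != 0) by move=> i j; rewrite inE z1.
case: (eqVneq Dl set0) => [D0|Dn].
  apply/matrixP => i j; apply/eqP; apply: contraT => ne.
  have : (i, j) \in Dl by rewrite inE.
  by rewrite D0 inE.
have [k' [r [c [rinj cinj H3E [HaF HbF HcD]]]]] := extract PE PD DE Pconn Dn.
exfalso.
have eqF : forall i j, (i, j) \in E :\: Dl -> A2 i j = A1 i j.
  by move=> i j; rewrite !inE negbK => /andP [/eqP -> _].
apply: (@cycle_contra d n k' B Bdiag Bnz r c rinj A1 A2).
- by move=> t u nz; apply: H3E; rewrite inE1.
- exact: z12.
- by move=> u; apply: eqF.
- by move=> u u0; apply: eqF; apply: HbF.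
- have := HcD; rewrite inE /= => ne.
  by case: (abs_eq_cases (a12 (r (0 - 1)) (c 0))) => // E1; rewrite E1 eqxx in ne.
- by move=> u; have := HaF u; rewrite !inE z1 => /andP [_].
- move=> u; case: (eqVneq u 0) => [->|u0].
    by have := subsetP DE _ HcD; rewrite inE1.
  by have := HbF u u0; rewrite !inE z1 => /andP [_].
- have hp := @phiC_inj d n k' r c rinj cinj.
  by rewrite (det_transfer hp h1) (det_transfer hp h2).
Qed.

Lemma int_sign (x : int) : x != 0 -> ~~ (0 < x) -> x < 0.
Proof. move=> /eqP h1 h2; lia. Qed.

Lemma sign_sq (b : bool) : ((-1) ^+ b : int) * (-1) ^+ b = 1.
Proof. by rewrite -signr_addb addbb. Qed.

Lemma exist_part (A : 'M[int]_(d, n)) P sigma : coordinatizing_path A P ->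
  exists A', has_signs A' P sigma /\ same_arith_matroid (row_mx B A') (row_mx B A).
Proof.
move=> [PE nc _].
have [al [be H]] := forest_sign nc (fun p => sigma p (+) (0 < A p.1 p.2)).
pose a (i : 'I_d) : int := (-1) ^+ al i.
pose b (j : 'I_n) : int := (-1) ^+ be j.
pose e (x : 'I_(d + n)) := match split x with inl i => a i | inr j => b j end.
pose A' := \matrix_(i, j) (a i * A i j * b j).
have a2 : forall i, a i * a i = 1 by move=> i; apply: sign_sq.
have e2 : forall x, e x * e x = 1 by move=> x; rewrite /e; case: split => ?; apply: sign_sq.
exists A'; split.
  move=> p pP; have hA : A p.1 p.2 != 0.
    by have := subsetP PE p pP; rewrite inE.
  have Hp := H p pP.
  rewrite mxE (_ : a p.1 * A p.1 p.2 * b p.2 = (-1) ^+ (al p.1 (+) be p.2) * A p.1 p.2).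
    rewrite Hp; case: (sigma p); case: (boolP (0 < A p.1 p.2)) => h /=.
    - by rewrite expr0 mul1r.
    - by rewrite expr1 mulN1r oppr_gt0; apply: int_sign.
    - by rewrite expr1 mulN1r oppr_lt0.
    - by rewrite expr0 mul1r; apply: int_sign.
  by rewrite signr_addb /a /b mulrAC mulrC mulrA.
have -> : row_mx B A' = scaleX a e (row_mx B A).
  apply/matrixP => i x; rewrite /scaleX mul_sdiag sdiag_mul /e.
  case: (split_ordP x) => [i' ->|j' ->]; rewrite ?row_mxEl ?row_mxEr.
    case: (eqVneq i i') => [<-|ne]; first by rewrite mulrC mulrA a2 mul1r.
    by rewrite Bdiag // mulr0 mul0r.
  by rewrite mxE.
exact: same_scale.
Qed.

Lemma part2 (A A'' : 'M[int]_(d, n)) P : coordinatizing_path A P ->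
  same_arith_matroid (row_mx B A'') (row_mx B A) ->
  exists sigma, has_signs A'' P sigma.
Proof.
move=> [PE _ _] h; exists (fun p => 0 < A'' p.1 p.2) => p pP.
have hA : A p.1 p.2 != 0 by have := subsetP PE p pP; rewrite inE.
have hA'' : A'' p.1 p.2 != 0 by rewrite -absz_eq0 (abs_entries h) absz_eq0.
by case: ifP => // /negbT; apply: int_sign.
Qed.

End Main.

Unset Implicit Arguments.
Theorem proposition4p1 (d n : nat) (B : 'M[int]_d) (A : 'M[int]_(d, n))
  (P : {set 'I_d * 'I_n}) :
  is_diag_mx B ->
  \rank (toR B) = d ->
  coordinatizing_path A P ->
  (forall sigma : 'I_d * 'I_n -> bool,
     exists! A' : 'M[int]_(d, n),
       has_signs A' P sigma /\ same_arith_matroid (row_mx B A') (row_mx B A)) /\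
  (forall A'' : 'M[int]_(d, n),
     same_arith_matroid (row_mx B A'') (row_mx B A) ->
     exists sigma : 'I_d * 'I_n -> bool,
       has_signs A'' P sigma /\ same_arith_matroid (row_mx B A'') (row_mx B A)).
Proof.
move=> Bd Br cp.
have Bdiag : forall i j, i != j -> B i j = 0.
  by move/is_diag_mxP: Bd => H i j ij; apply: H.
have Bnz : forall i, B i i != 0.
  have uB : toR B \in unitmx by rewrite -row_free_unit /row_free Br.
  rewrite unitmxE unitfE /toR det_map_mx intr_eq0 in uB.
  have trB : is_trig_mx B.
    by apply/is_trig_mxP => i j ij; apply: Bdiag; apply/negP => /eqP E1; rewrite E1 ltnn in ij.
  rewrite (det_trig trB) in uB.
  by move=> i; move/prodf_neq0: uB; apply.
split.
  move=> sigma; have [A' [hs hm]] := exist_part Bdiag sigma cp.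
  exists A'; split => // A2 [hs2 hm2].
  exact: (uniq_part Bdiag Bnz cp hs hs2 hm hm2).
move=> A'' h; have [sigma hs] := part2 Bdiag Bnz cp h.
by exists sigma.
Qed.
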